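(* Let $F$ be any one of the six faces of the cube $\widehat{\mathbf K}=[-1,1]^3$, let $V_1^F,\dots,V_4^F$ be its four vertices and $M^F$ its centroid. If $p\in\widehat{\mathbb P}^{(1)}_{SK}$ satisfies $p(V_j^F)=0$ for $j=1,2,3,4$ and $p(M^F)=0$, then $\int_F p\,ds=0$.
   Context: Coordinates on $\mathbb R^3$ are $(x_1,x_2,x_3)$; $P_2$ denotes polynomials of total degree at most $2$. The Type 1 Smith–Kidger space is $\widehat{\mathbb P}^{(1)}_{SK}=P_2\oplus\mathrm{Span}\{x_1x_2x_3,\ x_1^2x_2,\ x_2^2x_3,\ x_3^2x_1\}$, considered on $\widehat{\mathbf K}=[-1,1]^3$. *)

(* Defs.v *)
From Stdlib Require Import Reals.
From Coquelicot Require Import Coquelicot.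
Open Scope R_scope.

Definition pt3 := (R * R * R)%type.

(* A general element of the Type 1 Smith--Kidger space
   P_2 (+) span{x1 x2 x3, x1^2 x2, x2^2 x3, x3^2 x1},
   with coefficient vector c (indices 0..13). *)
Definition sk1_eval (c : nat -> R) (x : pt3) : R :=
  let '(x1, x2, x3) := x in
    c 0%nat
  + c 1%nat * x1 + c 2%nat * x2 + c 3%nat * x3
  + c 4%nat * x1 ^ 2 + c 5%nat * x2 ^ 2 + c 6%nat * x3 ^ 2
  + c 7%nat * (x1 * x2) + c 8%nat * (x1 * x3) + c 9%nat * (x2 * x3)
  + c 10%nat * (x1 * x2 * x3)
  + c 11%nat * (x1 ^ 2 * x2)
  + c 12%nat * (x2 ^ 2 * x3)
  + c 13%nat * (x3 ^ 2 * x1).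

Definition in_SK1 (p : pt3 -> R) : Prop :=
  exists c : nat -> R, forall x : pt3, p x = sk1_eval c x.

(* Faces of [-1,1]^3: the coordinate axis fixed, and its sign. *)
Inductive axis := Ax1 | Ax2 | Ax3.

Definition sgn (b : bool) : R := if b then 1 else -1.

(* Parametrization of the face {x_a = sgn s} by (u, v) in [-1,1]^2
   (an isometry onto the face, so ds = du dv). *)
Definition face_pt (a : axis) (s : bool) (u v : R) : pt3 :=
  match a with
  | Ax1 => (sgn s, u, v)
  | Ax2 => (u, sgn s, v)
  | Ax3 => (u, v, sgn s)
  end.

Definition face_vertex (a : axis) (s e1 e2 : bool) : pt3 :=
  face_pt a s (sgn e1) (sgn e2).

Definition face_centroid (a : axis) (s : bool) : pt3 := face_pt a s 0 0.

Definition face_integral (a : axis) (s : bool) (f : pt3 -> R) : R :=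
  RInt (fun v => RInt (fun u => f (face_pt a s u v)) (-1) 1) (-1) 1.

(* Main.v *)
Require Import Defs.
From Stdlib Require Import Reals Lra.
From Coquelicot Require Import Coquelicot.
Open Scope R_scope.

Lemma quad_int (a b c : R) :
  RInt (fun u => a + b * u + c * u ^ 2) (-1) 1 = 2 * a + 2 / 3 * c.
Proof.
  apply is_RInt_unique.
  set (F := fun u => a * u + b * u ^ 2 / 2 + c * u ^ 3 / 3).
  replace (2 * a + 2 / 3 * c) with (minus (F 1) (F (-1)))
    by (unfold minus, plus, opp, F; simpl; field).
  apply (is_RInt_derive F).
  - intros x _. unfold F. auto_derive; [exact I | field].
  - intros x _. apply (ex_derive_continuous (V:=R_NormedModule)). auto_derive. exact I.
Qed.

Definition Qp (k0 k1 k2 k3 k4 k5 k6 k7 u v : R) : R :=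
  k0 + k1 * u + k2 * v + k3 * u ^ 2 + k4 * v ^ 2 + k5 * (u * v)
  + k6 * (u ^ 2 * v) + k7 * (u * v ^ 2).

Lemma Q_int k0 k1 k2 k3 k4 k5 k6 k7 (f : R -> R -> R) :
  (forall u v, f u v = Qp k0 k1 k2 k3 k4 k5 k6 k7 u v) ->
  RInt (fun v => RInt (fun u => f u v) (-1) 1) (-1) 1
  = 4 * k0 + 4 / 3 * (k3 + k4).
Proof.
  intros Hf.
  rewrite (RInt_ext _ (fun v => (2 * k0 + 2/3 * k3) + (2 * k2 + 2/3 * k6) * v
                                 + (2 * k4) * v ^ 2)).
  - rewrite quad_int. lra.
  - intros v _.
    rewrite (RInt_ext _ (fun u => (k0 + k2 * v + k4 * v ^ 2)
                                + (k1 + k5 * v + k7 * v ^ 2) * u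
                                + (k3 + k6 * v) * u ^ 2)).
    + rewrite quad_int. lra.
    + intros u _. rewrite Hf. unfold Qp. match goal with |- ?x = ?y => change (@eq R x y) end. ring.
Qed.

Lemma Q_zero k0 k1 k2 k3 k4 k5 k6 k7 :
  Qp k0 k1 k2 k3 k4 k5 k6 k7 1 1 = 0 ->
  Qp k0 k1 k2 k3 k4 k5 k6 k7 1 (-1) = 0 ->
  Qp k0 k1 k2 k3 k4 k5 k6 k7 (-1) 1 = 0 ->
  Qp k0 k1 k2 k3 k4 k5 k6 k7 (-1) (-1) = 0 ->
  Qp k0 k1 k2 k3 k4 k5 k6 k7 0 0 = 0 ->
  4 * k0 + 4 / 3 * (k3 + k4) = 0.
Proof. unfold Qp. intros. lra. Qed.

Lemma gen (a : axis) (s : bool) (p : pt3 -> R) k0 k1 k2 k3 k4 k5 k6 k7 :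
  (forall u v, p (face_pt a s u v) = Qp k0 k1 k2 k3 k4 k5 k6 k7 u v) ->
  (forall e1 e2 : bool, p (face_vertex a s e1 e2) = 0) ->
  p (face_centroid a s) = 0 ->
  face_integral a s p = 0.
Proof.
  intros HQ Hv Hc. unfold face_integral.
  rewrite (Q_int k0 k1 k2 k3 k4 k5 k6 k7 (fun u v => p (face_pt a s u v))) by exact HQ.
  apply (Q_zero k0 k1 k2 k3 k4 k5 k6 k7); rewrite <- HQ.
  - exact (Hv true true).
  - exact (Hv true false).
  - exact (Hv false true).
  - exact (Hv false false).
  - exact Hc.
Qed.

Theorem lemma2 (a : axis) (s : bool) (p : pt3 -> R) :
  in_SK1 p ->
  (forall e1 e2 : bool, p (face_vertex a s e1 e2) = 0) ->
  p (face_centroid a s) = 0 ->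
  face_integral a s p = 0.
Proof.
  intros [c Hc].
  set (σ := sgn s).
  destruct a.
  - apply (gen _ _ _ (c 0%nat + c 1%nat * σ + c 4%nat * σ ^ 2)
             (c 2%nat + c 7%nat * σ + c 11%nat * σ ^ 2) (c 3%nat + c 8%nat * σ)
             (c 5%nat) (c 6%nat + c 13%nat * σ) (c 9%nat + c 10%nat * σ) (c 12%nat) 0).
    intros u v. rewrite Hc. unfold Qp, sk1_eval, face_pt. fold σ. ring.
  - apply (gen _ _ _ (c 0%nat + c 2%nat * σ + c 5%nat * σ ^ 2)
             (c 1%nat + c 7%nat * σ) (c 3%nat + c 9%nat * σ + c 12%nat * σ ^ 2)
             (c 4%nat + c 11%nat * σ) (c 6%nat) (c 8%nat + c 10%nat * σ) 0 (c 13%nat)).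
    intros u v. rewrite Hc. unfold Qp, sk1_eval, face_pt. fold σ. ring.
  - apply (gen _ _ _ (c 0%nat + c 3%nat * σ + c 6%nat * σ ^ 2)
             (c 1%nat + c 8%nat * σ + c 13%nat * σ ^ 2) (c 2%nat + c 9%nat * σ)
             (c 4%nat) (c 5%nat + c 12%nat * σ) (c 7%nat + c 10%nat * σ) (c 11%nat) 0).
    intros u v. rewrite Hc. unfold Qp, sk1_eval, face_pt. fold σ. ring.
Qed.
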